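(* Let $q=p^s$ be a power of a prime $p$, and let $b,c$ be positive integers with $b'+c'=q^k$ for some positive integer $k$, where $b'=b/\gcd(b,c)$, $c'=c/\gcd(b,c)$. Then $(b,c;q)$ is admissible, and the threshold $n_0=n_0(b,c;q)$ satisfies $$\max\Big\{\frac{b}{q-1},\ \frac{b+c}{q}+k-1\Big\}\le n_0\le\frac{b+c-\gcd(b,c)}{q-1}.$$
   Context: The Hamming graph $H(n,q)$ has vertex set $\mathbb{Z}_q^n$, two vertices adjacent iff they differ in exactly one coordinate. A $(b,c)$-coloring of $H(n,q)$ is a surjective map onto $\{1,2\}$ in which each color-1 vertex has exactly $b$ neighbours of color 2 and each color-2 vertex has exactly $c$ neighbours of color 1. The parameters $(b,c;q)$ are admissible if a $(b,c)$-coloring of $H(n,q)$ exists for some $n$; in that case such colorings exist exactly for $n\ge n_0$ for some integer $n_0=n_0(b,c;q)$, called the threshold. *)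

(* Defs.v *)
From HB Require Import structures.
From mathcomp Require Import all_boot all_order all_algebra.
Set Implicit Arguments. Unset Strict Implicit. Unset Printing Implicit Defensive.

Definition hvert (n q : nat) := {ffun 'I_n -> 'I_q}.

Definition hadj (n q : nat) (u v : hvert n q) : bool :=
  #|[set i | u i != v i]| == 1.

(* A (b,c)-coloring of H(n,q): col u = true means colour 1, false means colour 2. *)
Definition is_bc_coloring (n q b c : nat) (col : hvert n q -> bool) : Prop :=
  [/\ (exists u, col u), (exists v, ~~ col v),
      (forall u, col u -> #|[set v | hadj u v & ~~ col v]| = b) &
      (forall u, ~~ col u -> #|[set v | hadj u v & col v]| = c)].

Definition has_bc_coloring (n q b c : nat) : Prop :=
  exists col : hvert n q -> bool, @is_bc_coloring n q b c col.

Definition admissible (b c q : nat) : Prop := exists n, has_bc_coloring n q b c.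

Definition is_threshold (b c q n0 : nat) : Prop :=
  forall n, has_bc_coloring n q b c <-> n0 <= n.

(* Main.v *)
Require Import Defs.
From HB Require Import structures.
From mathcomp Require Import all_boot all_order all_algebra.
From mathcomp Require Import zify ring lra.
From Stdlib Require Classical_Prop.
From mathcomp Require Import all_field.
Set Implicit Arguments. Unset Strict Implicit. Unset Printing Implicit Defensive.
Import Order.TTheory GRing.Theory Num.Theory.

Section Ham.
Variables n q : nat.
Implicit Types u v : hvert n q.

Definition upd u (j : 'I_n) (y : 'I_q) : hvert n q :=
  [ffun i => if i == j then y else u i].

Lemma upd_same u j y : upd u j y j = y.
Proof. by rewrite ffunE eqxx. Qed.

Lemma upd_other u j y i : i != j -> upd u j y i = u i.
Proof. by rewrite ffunE => /negbTE ->. Qed.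

Lemma hadjP u v : reflect (exists j, v = upd u j (v j) /\ v j != u j) (hadj u v).
Proof.
apply: (iffP idP).
- rewrite /hadj => /cards1P [j Hj]. exists j.
  have: j \in [set i | u i != v i] by rewrite Hj set11.
  rewrite inE eq_sym => ->; split => //.
  apply/ffunP => i; rewrite ffunE; case: eqP => [->//|/eqP ij].
  apply/eqP; apply: contraR ij => H.
  have: i \in [set i | u i != v i] by rewrite inE eq_sym.
  by rewrite Hj inE.
- case=> j [Hv Hj]; rewrite /hadj; apply/cards1P; exists j.
  apply/setP => i; rewrite !inE; case: (eqVneq i j) => [->|ij].
  + by rewrite eq_sym Hj.
  + by rewrite Hv upd_other // eqxx.
Qed.

Lemma nbr_card (P : pred (hvert n q)) u :
  #|[set v | hadj u v & P v]| =
  \sum_(j < n) #|[set y | (y != u j) && P (upd u j y)]|.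
Proof.
pose D := [set p : 'I_n * 'I_q | (p.2 != u p.1) && P (upd u p.1 p.2)].
have -> : [set v | hadj u v & P v] = (fun p => upd u p.1 p.2) @: D.
  apply/setP => v; rewrite inE; apply/andP/imsetP.
  - case=> /hadjP [j [Hv Hj]] Pv; exists (j, v j) => //.
    by rewrite inE /= Hj -Hv Pv.
  - case=> [[j y]]; rewrite inE /= => /andP [Hy Py] ->; split => //.
    apply/hadjP; exists j; by rewrite upd_same.
rewrite card_in_imset.
  rewrite -sum1_card (eq_bigl (fun p => p \in D)) //.
  rewrite big_mkcond /= (eq_bigr (fun p => if (p.1, p.2) \in D then 1 else 0)); last by case.
  rewrite -(pair_bigA _ (fun i j => if (i, j) \in D then 1 else 0)) /=.
  apply: eq_bigr => j _; rewrite -sum1_card [RHS]big_mkcond /=.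
  by apply: eq_bigr => y _; rewrite !inE.
move=> [j y] [j' y']; rewrite !inE /= => /andP [Hy _] /andP [Hy' _] E.
case: (eqVneq j j') => [jj|jj].
  subst j'; congr (_, _); move: (congr1 (fun f : hvert n q => f j) E).
  by rewrite !upd_same.
move: (congr1 (fun f : hvert n q => f j) E); rewrite upd_same upd_other // => E'.
by rewrite E' eqxx in Hy.
Qed.


Lemma upd_id u j : upd u j (u j) = u.
Proof. by apply/ffunP => i; rewrite ffunE; case: eqP => [->|]. Qed.

Lemma upd_upd u j y z : upd (upd u j y) j z = upd u j z.
Proof. by apply/ffunP => i; rewrite !ffunE; case: eqP. Qed.

Lemma upd_comm u i j y z : upd (upd u i y) j z = upd (upd u j z) i y \/ i = j.
Proof.
case: (eqVneq i j) => [->|ij]; [by right|left].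
apply/ffunP => t; rewrite !ffunE; case: (eqVneq t j) => [->|//].
by rewrite eq_sym (negbTE ij).
Qed.

Open Scope ring_scope.

Definition L (j : 'I_n) (F : hvert n q -> int) : hvert n q -> int :=
  fun x => \sum_(y < q) F (upd x j y).

Lemma L_upd j F x z : L j F (upd x j z) = L j F x.
Proof. by apply: eq_bigr => y _; rewrite upd_upd. Qed.

Lemma L_comm i j F x : L i (L j F) x = L j (L i F) x.
Proof.
case: (eqVneq i j) => [->//|ij].
rewrite /L exchange_big /=; apply: eq_bigr => y _; apply: eq_bigr => z _.
by case: (upd_comm x i j z y) => [->|E] //; rewrite E eqxx in ij.
Qed.

Lemma L_LL j F x : L j (L j F) x = q%:R * L j F x.
Proof.
rewrite {1}/L (eq_bigr (fun _ => L j F x)); last by move=> y _; rewrite L_upd.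
by rewrite sumr_const card_ord mulr_natl.
Qed.

Lemma L_lin j F a c0 x : L j (fun z => a * F z + c0) x = a * L j F x + q%:R * c0.
Proof.
by rewrite /L big_split /= -mulr_sumr sumr_const card_ord mulr_natl.
Qed.

Lemma L_ext j F G x : (forall z, F z = G z) -> L j F x = L j G x.
Proof. by move=> H; apply: eq_bigr => y _. Qed.

Lemma sum_L j F : \sum_x L j F x = q%:R * \sum_x F x.
Proof.
rewrite /L pair_bigA /=.
pose h (p : hvert n q * 'I_q) := (upd p.1 j p.2, p.1 j).
pose h' (p : hvert n q * 'I_q) := (upd p.1 j p.2, p.1 j).
have hK : cancel h h'.
  by case=> x y; rewrite /h /h' /= upd_upd upd_same upd_id.
rewrite (eq_bigr (fun p => F (h p).1)) //.
rewrite -(@reindex_inj _ _ _ _ h predT (fun p => F p.1) (can_inj hK)) /=.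
rewrite -(pair_bigA _ (fun x (y : 'I_q) => F x)) /=.
rewrite mulr_sumr; apply: eq_bigr => x _.
by rewrite sumr_const card_ord mulr_natl.
Qed.

Lemma L_pos j F : (0 < q)%N -> 0 <= \sum_x F x * L j F x.
Proof.
move=> q0.
have E : \sum_x (L j F x) ^+ 2 = q%:R * \sum_x F x * L j F x.
  rewrite -(sum_L j (fun x => F x * L j F x)); apply: eq_bigr => x _.
  rewrite expr2 {2}/L mulr_sumr /L; apply: eq_bigr => y _.
  by rewrite -/(L j F (upd x j y)) -/(L j F x) L_upd mulrC.
have : 0 <= q%:R * \sum_x F x * L j F x.
  by rewrite -E; apply: sumr_ge0 => x _; apply: sqr_ge0.
by rewrite pmulr_rge0 // ltr0n.
Qed.

Lemma L_sum (I : finType) i (H : I -> hvert n q -> int) x :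
  L i (fun z => \sum_(j : I) H j z) x = \sum_(j : I) L i (H j) x.
Proof. by rewrite /L exchange_big. Qed.

Fixpoint G (T : seq 'I_n) (F : hvert n q -> int) : hvert n q -> int :=
  if T is j :: T' then L j (G T' F) else F.

Lemma G_in j T F x : j \in T -> L j (G T F) x = q%:R * G T F x.
Proof.
elim: T x => [//|i T IH] x /=; rewrite in_cons; case: (eqVneq j i) => [->|ji] /= H.
  by rewrite L_LL.
rewrite L_comm (L_ext _ (G := fun z => q%:R * G T F z + 0)); last first.
  by move=> z; rewrite IH // addr0.
by rewrite L_lin mulr0 addr0.
Qed.

Lemma G_rel (f : hvert n q -> int) th C T :
  (forall x, \sum_(j < n) L j f x = th * f x + C) ->
  forall x, \sum_(j < n) L j (G T f) x = th * G T f x + C * q%:R ^+ size T.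
Proof.
move=> H0; elim: T => [|i T IH] x /=; first by rewrite H0 expr0 mulr1.
under eq_bigr do rewrite L_comm.
rewrite -L_sum (L_ext _ (G := fun z => th * G T f z + C * q%:R ^+ size T)).
  by rewrite L_lin exprS; congr (_ + _); ring.
by move=> z; rewrite IH.
Qed.

End Ham.

Lemma sum_bool (I : finType) (A B : pred I) :
  (\sum_(i | A i) (B i : nat) = #|[set i | A i && B i]|)%N.
Proof.
rewrite -sum1_card big_mkcond [RHS]big_mkcond; apply eq_bigr => i _; rewrite inE.
by case: (A i); case: (B i).
Qed.

Lemma card_split q (P : pred 'I_q) y0 :
  (#|[set y | (y != y0) && P y]| + #|[set y | (y != y0) && ~~ P y]| = q.-1)%N.
Proof.
rewrite -!sum_bool -big_split /=.
rewrite (eq_bigr (fun _ => 1%N)); last by move=> y _; case: (P y).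
by rewrite sum1_card cardC1 card_ord.
Qed.

Section LB.
Variables n q b c : nat.
Variable col : hvert n q -> bool.
Hypothesis Hcol : @is_bc_coloring n q b c col.
Open Scope ring_scope.

Definition fcol (x : hvert n q) : int := (col x : nat)%:R.

Lemma nbr_total x :
  (#|[set v | hadj x v & col v]| + #|[set v | hadj x v & ~~ col v]| = n * q.-1)%N.
Proof.
rewrite !nbr_card -big_split /=.
rewrite (eq_bigr (fun _ => q.-1)); last by move=> j _; exact: card_split.
by rewrite sum_nat_const card_ord.
Qed.

Lemma L_fcol j x :
  L j fcol x = fcol x + #|[set y | (y != x j) && col (upd x j y)]|%:R.
Proof.
rewrite /L (bigD1 (x j)) //= upd_id; congr (_ + _).
by rewrite -sum_bool natr_sum.
Qed.

Lemma rel0 x : (0 < q)%N ->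
  \sum_(j < n) L j fcol x = ((n * q)%:R - (b + c)%:R) * fcol x + c%:R.
Proof.
move=> q0; case: Hcol => _ _ Hb Hc.
under eq_bigr do rewrite L_fcol.
rewrite big_split /= sumr_const card_ord -natr_sum.
have -> : (\sum_(i < n) #|[set y | (y != x i) && col (upd x i y)]|)%N =
          #|[set v | hadj x v & col v]| by rewrite nbr_card.
have T := nbr_total x; rewrite /fcol.
case Cx: (col x) => /=.
  rewrite Hb // in T.
  have -> : (#|[set v | hadj x v & col v]| = n * q.-1 - b)%N by lia.
  have qb : (b <= n * q.-1)%N by lia.
  rewrite natrB // natrM -subn1 natrB // natrD.
  rewrite -mulr_natl. ring.
rewrite Hc ?Cx //; ring.
Qed.


Lemma lb_face T x0 : uniq T -> (size T <= n)%N -> ((n - size T) * q < b + c)%N ->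
  (0 < q)%N ->
  ((b + c) * `|G T fcol x0| = c * q ^ size T)%N.
Proof.
move=> uT mn sq q0.
set m := size T.
have R := G_rel T (fun x => rel0 x q0).
have cT : #|[pred j : 'I_n | j \in T]| = m.
  by rewrite /m -(card_uniqP uT); apply: eq_card.
have cNT : #|[pred j : 'I_n | j \notin T]| = (n - m)%N.
  have := cardC (mem T); rewrite (card_uniqP uT) -/m card_ord => E.
  have E' : #|[pred j : 'I_n | j \notin T]| = #|[predC mem T]| by apply: eq_card.
  by rewrite E'; apply: (@addnI m); rewrite subnKC.
have E1 x : \sum_(j < n | j \notin T) L j (G T fcol) x =
    (((n - m) * q)%:R - (b + c)%:R) * G T fcol x + c%:R * q%:R ^+ m.
  have := R x; rewrite (bigID (fun j => j \in T)) /=.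
  rewrite (eq_bigr (fun _ => q%:R * G T fcol x)); last by move=> j jT; rewrite G_in.
  rewrite sumr_const.
  rewrite (_ : #|[pred i : 'I_n | i \in T]| = m); last by rewrite -cT.
  move=> Hx; apply: (addrI (q%:R * G T fcol x *+ m)); rewrite Hx.
  rewrite -mulr_natr !natrM natrB //; ring.
pose h x := (b + c)%:R * G T fcol x - c%:R * q%:R ^+ m.
have E2 x : \sum_(j < n | j \notin T) L j h x =
    (((n - m) * q)%:R - (b + c)%:R) * h x.
  rewrite (eq_bigr (fun j => (b + c)%:R * L j (G T fcol) x + q%:R * (- (c%:R * q%:R ^+ m)))).
    rewrite big_split /= -mulr_sumr E1 sumr_const.
    rewrite (_ : #|[pred i : 'I_n | i \notin T]| = (n - m)%N); last by rewrite -cNT.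
    rewrite /h natrM; ring.
  by move=> j _; rewrite /h L_lin.
have Q1 : 0 <= \sum_x h x * \sum_(j < n | j \notin T) L j h x.
  under eq_bigr do rewrite mulr_sumr.
  rewrite exchange_big /=; apply: sumr_ge0 => j _; exact: L_pos.
have Q2 : \sum_x h x ^+ 2 = 0.
  apply/eqP; rewrite eq_le sumr_ge0 ?andbT; last by move=> x _; apply: sqr_ge0.
  have neg : ((n - m) * q)%:R - (b + c)%:R < 0 :> int.
    by rewrite subr_lt0 ltr_nat.
  move: Q1; under eq_bigr do rewrite E2.
  rewrite (eq_bigr (fun x => (((n - m) * q)%:R - (b + c)%:R) * h x ^+ 2)); last first.
    by move=> x _; rewrite expr2; ring.
  by rewrite -mulr_sumr nmulr_rge0.
have h0 : h x0 = 0.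
  have := psumr_eq0P (fun x _ => sqr_ge0 (h x)) Q2 (i := x0) isT.
  by move/eqP; rewrite sqrf_eq0 => /eqP.
have : (b + c)%:R * G T fcol x0 = ((c * q ^ m)%N)%:R :> int.
  by apply/eqP; rewrite natrM natrX -subr_eq0 -/(h x0) h0.
move/(congr1 absz); rewrite abszM natz absz_nat => ->.
by rewrite natz absz_nat.
Qed.

End LB.

Lemma lb_main n q b c d c' k (col : hvert n q -> bool) :
  @is_bc_coloring n q b c col -> (1 < q)%N -> c = (d * c')%N -> (0 < d)%N ->
  (b + c = d * q ^ k)%N -> coprime (q ^ k) c' -> (0 < c)%N -> (0 < k)%N ->
  ((b + c).-1 %/ q + k <= n)%N.
Proof.
move=> Hcol q1 Ec d0 Ebc cop c0 k0.
set s := minn n ((b + c).-1 %/ q).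
set T := take (n - s) (enum 'I_n).
have sT : size T = (n - s)%N by rewrite size_takel // size_enum_ord leq_subr.
have uT : uniq T by rewrite take_uniq // enum_uniq.
have [x0 _] : exists x0, col x0 by case: Hcol.
have sq : ((n - size T) * q < b + c)%N.
  rewrite sT (_ : (n - (n - s))%N = s); last by rewrite /s; lia.
  apply: (@leq_ltn_trans ((b + c).-1 %/ q * q)).
    by rewrite leq_mul2r geq_minr orbT.
  apply: (@leq_ltn_trans (b + c).-1); first exact: leq_divM.
  by rewrite prednK // addn_gt0 c0 orbT.
have := lb_face Hcol x0 uT _ sq (ltnW q1); rewrite sT leq_subr => /(_ isT).
rewrite Ebc Ec -!mulnA => /eqP; rewrite eqn_pmul2l // => /eqP E.
have : (q ^ k %| q ^ (n - s))%N.
  by rewrite -(Gauss_dvdr _ cop) -E dvdn_mulr.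
move/dvdn_leq; rewrite expn_gt0 (ltnW q1) => /(_ isT).
rewrite leq_exp2l // /s => H.
rewrite -Ebc; move: H; set X := ((b + c).-1 %/ q)%N; lia.
Qed.

Section Mono.
Variables n q : nat.

Definition proj (u : hvert n.+1 q) : hvert n q := [ffun i => u (widen_ord (leqnSn n) i)].

Lemma proj_upd_w u i y : proj (upd u (widen_ord (leqnSn n) i) y) = upd (proj u) i y.
Proof. by apply/ffunP => i'; rewrite !ffunE. Qed.

Lemma proj_upd_max u y : proj (upd u ord_max y) = proj u.
Proof.
apply/ffunP => i'; rewrite !ffunE.
suff -> : (widen_ord (leqnSn n) i' == ord_max) = false by [].
by apply/negbTE; rewrite -val_eqE /= neq_ltn ltn_ord.
Qed.

Lemma nbr_proj (P : pred (hvert n q)) u :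
  #|[set v | hadj u v & P (proj v)]| =
  (#|[set v | hadj (proj u) v & P v]| + P (proj u) * q.-1)%N.
Proof.
rewrite !nbr_card big_ord_recr /=; congr (_ + _)%N.
  by apply: eq_bigr => i _; apply: eq_card => y; rewrite !inE proj_upd_w !ffunE.
rewrite (eq_card (B := [pred y | (y != u ord_max) && P (proj u)])); last first.
  by move=> y; rewrite !inE proj_upd_max.
case: (P (proj u)) => /=.
  rewrite mul1n; have := cardC1 (u ord_max); rewrite card_ord => <-.
  apply: eq_card => y.
  by rewrite !inE andbT.
by rewrite mul0n; apply: eq_card0 => y; rewrite !inE andbF.
Qed.

Lemma mono b c : (0 < q)%N -> has_bc_coloring n q b c -> has_bc_coloring n.+1 q b c.
Proof.
move=> q0 [col [[u Cu] [v Cv] Hb Hc]].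
exists (fun w => col (proj w)).
pose ext (u : hvert n q) : hvert n.+1 q :=
  [ffun i : 'I_n.+1 => oapp u (Ordinal q0) (insub (val i))].
have extK w : proj (ext w) = w.
  by apply/ffunP => i; rewrite !ffunE /= valK.
split.
- by exists (ext u); rewrite extK.
- by exists (ext v); rewrite extK.
- move=> w Cw; rewrite (nbr_proj (fun z => ~~ col z)) Cw /= mul0n addn0.
  exact: Hb.
- move=> w Cw; rewrite (nbr_proj col) (negbTE Cw) /= mul0n addn0.
  exact: Hc.
Qed.

End Mono.

Lemma pair_card (I J : finType) (P : I -> J -> bool) :
  #|[set p : I * J | P p.1 p.2]| = (\sum_i #|[set j | P i j]|)%N.
Proof.
rewrite -sum1_card big_mkcond /= (eq_bigr (fun p => if P p.1 p.2 then 1%N else 0%N)); last first.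
  by move=> p _; rewrite inE.
rewrite -(pair_bigA _ (fun i j => if P i j then 1%N else 0%N)) /=.
apply: eq_bigr => i _; rewrite -sum1_card [RHS]big_mkcond /=.
by apply eq_bigr => j _; rewrite inE.
Qed.

Section Constr.
Open Scope ring_scope.
Variables (F : finFieldType) (kk n q d : nat).
Variables (phi : 'I_q -> F) (psi : F -> 'I_q).
Hypotheses (phiK : cancel phi psi) (psiK : cancel psi phi).
Variable colv : 'I_n -> 'rV[F]_kk.
Hypothesis colv_nz : forall j, colv j != 0.
Hypothesis HQ : forall w, w != 0 ->
  #|[set p : 'I_n * F | (p.2 != 0) && (p.2 *: colv p.1 == w)]| = d.

Definition sigma (u : hvert n q) := \sum_(j < n) phi (u j) *: colv j.

Lemma sigma_upd u j y : sigma (upd u j y) = sigma u + (phi y - phi (u j)) *: colv j.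
Proof.
rewrite /sigma (bigD1 j) // [in RHS](bigD1 j) //= upd_same.
rewrite (eq_bigr (fun i => phi (u i) *: colv i)); last first.
  by move=> i ij; rewrite upd_other.
by rewrite scalerBl [RHS]addrC addrA subrK.
Qed.

Lemma shift_count y0 (R : pred F) :
  #|[set y | (y != y0) && R (phi y - phi y0)]| = #|[set a | (a != 0) && R a]|.
Proof.
have -> : [set a | (a != 0) && R a] =
   (fun y => phi y - phi y0) @: [set y | (y != y0) && R (phi y - phi y0)].
  apply/setP => a; rewrite inE; apply/idP/imsetP.
  - case/andP => a0 Ra; exists (psi (a + phi y0)); last by rewrite psiK addrK.
    rewrite inE psiK addrK Ra andbT; apply: contra a0 => /eqP E.
    by rewrite -[a](addrK (phi y0)) -[a + _]psiK E subrr.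
  - case=> y; rewrite inE => /andP [yy0 Ry] ->; rewrite Ry andbT subr_eq0.
    by rewrite (can_eq phiK).
rewrite card_in_imset // => y1 y2 _ _ /addIr; exact: can_inj.
Qed.

Lemma shiftV_count (z0 : 'rV[F]_kk) (Q : pred 'rV[F]_kk) :
  #|[set w | (w != 0) && Q (z0 + w)]| = #|[set z | (z != z0) && Q z]|.
Proof.
have -> : [set z | (z != z0) && Q z] = (fun w => z0 + w) @: [set w | (w != 0) && Q (z0 + w)].
  apply/setP => z; rewrite inE; apply/idP/imsetP.
  - case/andP => zz Qz; exists (z - z0); last by rewrite subrKC.
    by rewrite inE subrKC Qz andbT subr_eq0.
  - case=> w; rewrite inE => /andP [w0 Qw] ->; rewrite Qw andbT.
    by apply: contra w0; rewrite -{2}(addr0 z0) => /eqP /addrI ->.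
by rewrite card_in_imset // => w1 w2 _ _ /addrI.
Qed.

Lemma count_nbr u (Q : pred 'rV[F]_kk) :
  #|[set v | hadj u v & Q (sigma v)]| = (d * #|[set z | (z != sigma u) && Q z]|)%N.
Proof.
rewrite nbr_card.
rewrite (eq_bigr (fun j => #|[set a : F | (a != 0) && Q (sigma u + a *: colv j)]|)); last first.
  move=> j _; rewrite -(shift_count (u j) (fun a => Q (sigma u + a *: colv j))).
  by apply: eq_card => y; rewrite !inE sigma_upd.
rewrite -(pair_card (fun j (a : F) => (a != 0) && Q (sigma u + a *: colv j))).
pose f (p : 'I_n * F) := p.2 *: colv p.1.
rewrite -sum1_card.
rewrite (partition_big f (fun w => (w != 0) && Q (sigma u + w))); last first.
  case=> j a; rewrite inE /= /f => /andP [a0 Qa]; rewrite Qa andbT scaler_eq0 negb_or a0.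
  exact: colv_nz.
rewrite -(shiftV_count (sigma u) Q).
rewrite (eq_bigr (fun _ => d)); last first.
  move=> w /andP [w0 Qw].
  rewrite -(HQ w0) -sum1_card; apply: eq_bigl => -[j a]; rewrite !inE /f /=.
apply/andP/andP => [[/andP [a0 _] /eqP ->]|[a0 /eqP E]]; first by rewrite eqxx.
  by rewrite a0 E Qw.
rewrite sum_nat_const mulnC; congr (_ * _)%N; apply: eq_card => w; by rewrite !inE.
Qed.

Lemma constr_col (T : {set 'rV[F]_kk}) : (0 < #|T|)%N -> (#|T| < #|{: 'rV[F]_kk}|)%N ->
  (0 < d)%N -> has_bc_coloring n q (d * #|~: T|) (d * #|T|).
Proof.
move=> T0 T1 d0.
have CN u : #|[set v | hadj u v & ~~ (sigma v \in T)]| =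
             (d * #|[set z | (z != sigma u) && (z \notin T)]|)%N.
  by rewrite -(count_nbr u (fun z => z \notin T)).
have CI u : #|[set v | hadj u v & (sigma v \in T)]| =
             (d * #|[set z | (z != sigma u) && (z \in T)]|)%N.
  by rewrite -(count_nbr u (fun z => z \in T)).
have E1 u : sigma u \in T -> #|[set z | (z != sigma u) && (z \notin T)]| = #|~: T|.
  move=> su; apply: eq_card => z; rewrite !inE.
  by case: (eqVneq z (sigma u)) => [->|]; rewrite ?su.
have E2 u : sigma u \notin T -> #|[set z | (z != sigma u) && (z \in T)]| = #|T|.
  move=> su; apply: eq_card => z; rewrite !inE.
  by case: (eqVneq z (sigma u)) => [->|]; rewrite ?(negbTE su).
have TC : (0 < #|~: T|)%N by have := cardsC T; move=> E; move: T1; rewrite -E; lia.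
exists (fun u => sigma u \in T); split.
- pose u0 : hvert n q := [ffun _ => psi 0].
  case: (boolP (sigma u0 \in T)) => H; first by exists u0.
  have : (0 < #|[set v | hadj u0 v & (sigma v \in T)]|)%N by rewrite CI E2 // muln_gt0 d0.
  by rewrite card_gt0 => /set0Pn [v]; rewrite inE => /andP [_ Hv]; exists v.
- pose u0 : hvert n q := [ffun _ => psi 0].
  case: (boolP (sigma u0 \in T)) => H; last by exists u0.
  have : (0 < #|[set v | hadj u0 v & ~~ (sigma v \in T)]|)%N by rewrite CN E1 // muln_gt0 d0.
  by rewrite card_gt0 => /set0Pn [v]; rewrite inE => /andP [_ Hv]; exists v.
- by move=> u Hu; rewrite CN E1.
- by move=> u Hu; rewrite CI E2.
Qed.

End Constr.

Section Proj.
Open Scope ring_scope.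
Variables (F : finFieldType) (kk : nat).
Notation V := 'rV[F]_kk.

Definition lead (v : V) := [pick i | v 0 i != 0].
Definition coef (v : V) : F := if lead v is Some i then v 0 i else 1.
Definition rep (v : V) : V := (coef v)^-1 *: v.

Lemma coef_nz v : coef v != 0.
Proof. by rewrite /coef /lead; case: pickP => [i ->|_] //; exact: oner_neq0. Qed.

Lemma repK v : coef v *: rep v = v.
Proof. by rewrite /rep scalerA mulfV ?coef_nz ?scale1r. Qed.

Lemma lead0 v : lead v = None -> v = 0.
Proof.
rewrite /lead; case: pickP => // H _; apply/rowP => i.
by rewrite mxE; move: (H i) => /negbFE /eqP.
Qed.

Lemma repZ a v : a != 0 -> rep (a *: v) = rep v.
Proof.
move=> a0; case E: (lead v) => [i|]; last by rewrite (lead0 E) scaler0.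
have E' : lead (a *: v) = Some i.
  by rewrite -E /lead; apply: eq_pick => j; rewrite mxE mulf_eq0 (negbTE a0).
have vi : v 0 i != 0 by move: E; rewrite /lead; case: pickP => // j Hj [<-].
rewrite /rep /coef E E' mxE scalerA; congr (_ *: _).
by rewrite invfM mulrAC mulVf // mul1r.
Qed.

Lemma rep_nz v : v != 0 -> rep v != 0.
Proof. by move=> v0; rewrite /rep scaler_eq0 invr_eq0 negb_or coef_nz. Qed.

Lemma rep_rep v : rep (rep v) = rep v.
Proof. by rewrite {2}/rep repZ // invr_eq0 coef_nz. Qed.

Definition Pset := [set v : V | (v != 0) && (rep v == v)].

Lemma uniq_pair w : w != 0 ->
  #|[set p : V * F | (p.1 \in Pset) && (p.2 != 0) && (p.2 *: p.1 == w)]| = 1%N.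
Proof.
move=> w0; apply/eqP/cards1P; exists (rep w, coef w); apply/setP => -[v a].
rewrite !inE /= xpair_eqE; apply/idP/idP.
- case/andP => /andP [/andP [v0 /eqP rv] a0] /eqP E.
  have Ev : rep w = v by rewrite -E repZ.
  rewrite Ev eqxx /=.
  have : a *: v == coef w *: v by rewrite -{2}Ev repK E.
  by rewrite -subr_eq0 -scalerBl scaler_eq0 (negbTE v0) orbF subr_eq0.
- case/andP => /eqP -> /eqP ->; rewrite repK eqxx rep_rep eqxx rep_nz //.
  by rewrite coef_nz.
Qed.

Lemma sum_Pset (G : V -> nat) d :
  (\sum_(x in [pred x : 'I_d * V | x.2 \in Pset]) G x.2 =
   d * \sum_(v | v \in Pset) G v)%N.
Proof.
rewrite big_mkcond /=.
rewrite (eq_bigr (fun x => if x.2 \in Pset then G x.2 else 0%N)); last by move=> x _; rewrite inE.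
rewrite -(pair_bigA _ (fun (t : 'I_d) v => if v \in Pset then G v else 0%N)) /=.
by rewrite sum_nat_const card_ord -big_mkcond.
Qed.

Lemma colP_Q d w : w != 0 ->
  #|[set p : 'I_#|[pred x : 'I_d * V | x.2 \in Pset]| * F |
      (p.2 != 0) && (p.2 *: (enum_val p.1).2 == w)]| = d.
Proof.
move=> w0.
rewrite (pair_card (fun (j : 'I_#|[pred x : 'I_d * V | x.2 \in Pset]|) (a : F) =>
  (a != 0) && (a *: (enum_val j).2 == w))).
rewrite -(big_enum_val (fun x : 'I_d * V => #|[set a : F | (a != 0) && (a *: x.2 == w)]|)).
transitivity (d * \sum_(v | v \in Pset) #|[set a : F | (a != 0%R) && (a *: v == w)%R]|)%N.
  exact: (sum_Pset (fun v => #|[set a : F | (a != 0) && (a *: v == w)]|)).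
rewrite -{2}(muln1 d); congr (_ * _)%N.
rewrite -[RHS](uniq_pair w0) (pair_card (fun v (a : F) => (v \in Pset) && (a != 0) && (a *: v == w))).
rewrite big_mkcond /=; apply: eq_bigr => v _.
case: (v \in Pset) => //=.
by apply/esym/eqP; rewrite cards_eq0; apply/eqP/setP => a; rewrite !inE.
Qed.

Lemma cardA d : #|[pred x : 'I_d * V | x.2 \in Pset]| = (d * #|Pset|)%N.
Proof.
rewrite -[LHS]sum1_card.
transitivity (d * \sum_(v | v \in Pset) 1)%N; first exact: (sum_Pset (fun _ => 1%N) d).
by rewrite sum1_card; congr (_ * _)%N; apply: eq_card.
Qed.

Lemma cardP : (#|Pset| * #|F|.-1 = #|{: V}|.-1)%N.
Proof.
have -> : #|{: V}|.-1 = #|[set w : V | w != 0]|.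
  by rewrite -(cardC1 (0 : V)); apply: eq_card => w; rewrite !inE.
rewrite -[RHS]sum1_card (eq_bigr (fun w => #|[set p : V * F | (p.1 \in Pset) && (p.2 != 0) && (p.2 *: p.1 == w)]|)); last first.
  by move=> w; rewrite inE => w0; rewrite uniq_pair.
have -> : (#|Pset| * #|F|.-1 = #|[set p : V * F | (p.1 \in Pset) && (p.2 != 0%R)]|)%N.
  rewrite (pair_card (fun v (a : F) => (v \in Pset) && (a != 0))).
  rewrite -sum1_card big_distrl /= big_mkcond /=; apply: eq_bigr => v _.
  case: (v \in Pset) => /=.
    rewrite mul1n -(cardC1 (0 : F)); apply: eq_card => a; by rewrite !inE.
  by apply/esym/eqP; rewrite cards_eq0; apply/eqP/setP => a; rewrite !inE.
rewrite -sum1_card (partition_big (fun p : V * F => p.2 *: p.1) (fun w => w \in [set w : V | w != 0])).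
  apply: eq_bigr => w _; rewrite -sum1_card; apply: eq_bigl => -[v a]; by rewrite !inE.
case=> v a; rewrite !inE /= => /andP [/andP [v0 _] a0].
by rewrite scaler_eq0 negb_or a0.
Qed.

End Proj.

Lemma min_ex (P : nat -> Prop) n : P n -> exists n0, P n0 /\ forall m, P m -> (n0 <= m)%N.
Proof.
elim: n {-2}n (leqnn n) => [|N IH] n Hn Pn.
  by exists n; split => // m _; move: Hn; rewrite leqn0 => /eqP ->.
case: (Classical_Prop.classic (exists m, (m < n)%N /\ P m)) => [[m [mn Pm]]|H].
  by apply: (IH m) => //; lia.
exists n; split => // m Pm; rewrite leqNgt; apply/negP => mn; apply: H; by exists m.
Qed.

Theorem theorem9 (p s q b c k : nat) :
  prime p -> 0 < s -> q = p ^ s ->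
  0 < b -> 0 < c -> 0 < k ->
  b %/ gcdn b c + c %/ gcdn b c = q ^ k ->
  admissible b c q /\
  exists n0 : nat, is_threshold b c q n0 /\
    (((b%:R / (q - 1)%:R : rat) <= n0%:R)%R /\
     ((b + c)%:R / q%:R + k%:R - 1 <= (n0%:R : rat))%R) /\
    ((n0%:R : rat) <= (b + c - gcdn b c)%:R / (q - 1)%:R)%R.
Proof.
move=> pr s0 Eq b0 c0 k0 Ebc.
set d := gcdn b c in Ebc *; set b' := b %/ d in Ebc; set c' := c %/ d in Ebc.
have d0 : 0 < d by rewrite gcdn_gt0 b0.
have Eb : b = d * b' by rewrite /b' mulnC divnK // dvdn_gcdl.
have Ec : c = d * c' by rewrite /c' mulnC divnK // dvdn_gcdr.
have q1 : 1 < q.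
  rewrite Eq; apply: (@leq_trans p); first exact: prime_gt1.
  by rewrite -{1}(expn1 p) leq_pexp2l // prime_gt0.
have cop' : coprime b' c'.
  rewrite /coprime -(eqn_pmul2l d0) muln_gcdr -Eb -Ec muln1.
  by [].
have cop : coprime (q ^ k) c'.
  by rewrite -Ebc coprime_sym /coprime gcdnDr -/(coprime c' b') coprime_sym.
have b'0 : 0 < b' by move: b0; rewrite Eb muln_gt0 => /andP [].
have c'0 : 0 < c' by move: c0; rewrite Ec muln_gt0 => /andP [].
have Ebc2 : b + c = d * q ^ k by rewrite Eb Ec -mulnDr Ebc.
have [Fq _ cardF] := pPrimePowerField pr s0.
have cardF' : #|Fq| = q by rewrite cardF Eq.
pose phi (y : 'I_q) : Fq := enum_val (cast_ord (esym cardF') y).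
pose psi (x : Fq) : 'I_q := cast_ord cardF' (enum_rank x).
have phiK : cancel phi psi by move=> y; rewrite /psi /phi enum_valK cast_ordKV.
have psiK : cancel psi phi by move=> x; rewrite /psi /phi cast_ordK enum_rankK.
pose A := [pred x : 'I_d * 'rV[Fq]_k | x.2 \in Pset Fq k].
pose colv (j : 'I_#|A|) := (enum_val j).2.
have colv_nz j : colv j != 0%R.
  by have := enum_valP j; rewrite /colv unfold_in /= inE => /andP [].
have HQ := @colP_Q Fq k d.
have cardV : #|{: 'rV[Fq]_k}| = q ^ k by rewrite card_mx cardF' mul1n.
pose Tset := [set v : 'rV[Fq]_k | v \in take c' (enum 'rV[Fq]_k)].
have cT : #|Tset| = c'.
  transitivity #|take c' (enum 'rV[Fq]_k)|; first by apply: eq_card => v; rewrite inE.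
  rewrite (card_uniqP _); last by rewrite take_uniq // enum_uniq.
  by rewrite size_takel // -cardT cardV -Ebc leq_addl.
have cTC : #|~: Tset| = b'.
  by have := cardsC Tset; rewrite cT cardV -Ebc; lia.
have col := @constr_col Fq k #|A| q d phi psi phiK psiK colv colv_nz HQ Tset.
rewrite cT cTC -Eb -Ec in col.
have Hn : has_bc_coloring #|A| q b c.
  apply: col => //.
  by rewrite cardV -Ebc; lia.
have nA : #|A| * (q - 1) = b + c - d.
  rewrite cardA -mulnA subn1 -cardF' cardP cardV Ebc2.
  by rewrite -subn1 mulnBr muln1.
have [n0 [Hn0 min0]] := @min_ex (fun n => has_bc_coloring n q b c) _ Hn.
split; first by exists #|A|.
exists n0; split.
  move=> m; split; first exact: min0.
  move=> le; rewrite -(subnK le); elim: (m - n0) => [//|t IH].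
  by rewrite addSn; apply: mono => //; lia.
have [col0 Hcol0] := Hn0.
have Lk := lb_main Hcol0 q1 Ec d0 Ebc2 cop c0 k0.
case: Hcol0 => [[u Cu] _ Hb _].
have Lb : b <= n0 * (q - 1).
  by have := nbr_total col0 u; rewrite Hb // subn1; lia.
have Ln : n0 <= #|A| := min0 _ Hn.
have q0 : (0 < (q - 1)%:R :> rat)%R by rewrite ltr0n subn_gt0.
have q0' : (0 < q%:R :> rat)%R by rewrite ltr0n; lia.
split; [split|].
- by rewrite ler_pdivrMr // -natrM ler_nat.
- set X := (b + c).-1 %/ q in Lk.
  have h0 : b + c <= X.+1 * q.
    have := ltn_ceil (b + c).-1 (ltnW q1); rewrite -/X; lia.
  have h1 : ((b + c)%:R / q%:R <= (X%:R + 1 : rat))%R.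
    by rewrite ler_pdivrMr // natr1 -natrM ler_nat.
  have h2 : ((X%:R : rat) + k%:R <= n0%:R)%R by rewrite -natrD ler_nat.
  lra.
- rewrite ler_pdivlMr // -natrM ler_nat -nA leq_mul2r Ln orbT //.
Qed.
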